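(* For $k\in\{1,\dots,m\}$ let $A_k\in\mathbb{R}^n$ with $\|A_k\|>0$ and $b_k\in\mathbb{R}$, and let $f(X)=\max_{k\in\{1,\dots,m\}}\left(A_k^TX+b_k\right)$. Let $X_0\in\mathbb{R}^n$ and $R>0$ be such that for all $X$ in the open ball $B(X_0,R)$: (1) $0\notin\partial f(X)$, and (2) every $d_X\in\partial f(X)$ satisfies $\|d_X\|\ge\underline{d}$, where $\underline{d}>0$ is a fixed constant. Then there exists $X\in B(X_0,R)$ such that $$f(X)\le f(X_0)-\underline{d}\cdot\frac{R}{2}.$$
   Context: $\partial f(X)$ denotes the subdifferential of the convex function $f$ at $X$. The function $f$ is the standing function of the paper's section, the maximum of the affine functions $A_k^TX+b_k$. *)

(* Defs.v *)
From HB Require Import structures.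
From mathcomp Require Import all_boot all_order all_algebra.
From mathcomp Require Import reals.
Set Implicit Arguments. Unset Strict Implicit. Unset Printing Implicit Defensive.
Import Order.TTheory GRing.Theory Num.Theory.
Local Open Scope ring_scope.

Definition dotv (R : realType) (n : nat) (u v : 'rV[R]_n) : R :=
  \sum_(i < n) u ord0 i * v ord0 i.

Definition enorm (R : realType) (n : nat) (u : 'rV[R]_n) : R :=
  Num.sqrt (dotv u u).

(* f(X) = max_{k in {1..m}} (A_k^T X + b_k); indices k : 'I_m.+1, i.e. m.+1 >= 1 pieces. *)
Definition pwmax (R : realType) (n m : nat) (A : 'I_m.+1 -> 'rV[R]_n)
  (b : 'I_m.+1 -> R) (X : 'rV[R]_n) : R :=
  \big[Num.max/(dotv (A ord0) X + b ord0)]_(k < m.+1) (dotv (A k) X + b k).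

Definition subdiff (R : realType) (n : nat) (f : 'rV[R]_n -> R) (X : 'rV[R]_n)
  (g : 'rV[R]_n) : Prop :=
  forall Y : 'rV[R]_n, f X + dotv g (Y - X) <= f Y.

(* Main.v *)
Require Import Defs.
From HB Require Import structures.
From mathcomp Require Import all_boot all_order all_algebra.
From mathcomp Require Import reals.
From mathcomp Require Import all_classical all_reals all_analysis.
From mathcomp Require Import ring lra.
Import Order.TTheory GRing.Theory Num.Theory.
Import numFieldNormedType.Exports.
Local Open Scope classical_set_scope.
Local Open Scope ring_scope.

Section A.
Context {R : realType} {n : nat}.
Implicit Types u v w : 'rV[R]_n.

Lemma dotvDl u v w : dotv (u + v) w = dotv u w + dotv v w.
Proof. by rewrite /dotv -big_split /=; apply: eq_bigr => i _; rewrite mxE mulrDl. Qed.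
Lemma dotvC u v : dotv u v = dotv v u.
Proof. by rewrite /dotv; apply: eq_bigr => i _; rewrite mulrC. Qed.
Lemma dotvZl a u v : dotv (a *: u) v = a * dotv u v.
Proof. by rewrite /dotv mulr_sumr; apply: eq_bigr => i _; rewrite mxE mulrA. Qed.
Lemma dotvNl u v : dotv (- u) v = - dotv u v.
Proof. by rewrite -scaleN1r dotvZl mulN1r. Qed.
Lemma dotvBl u v w : dotv (u - v) w = dotv u w - dotv v w.
Proof. by rewrite dotvDl dotvNl. Qed.
Lemma dotvDr u v w : dotv w (u + v) = dotv w u + dotv w v.
Proof. by rewrite dotvC dotvDl !(dotvC w). Qed.
Lemma dotvZr a u v : dotv v (a *: u) = a * dotv v u.
Proof. by rewrite dotvC dotvZl dotvC. Qed.
Lemma dotvBr u v w : dotv w (u - v) = dotv w u - dotv w v.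
Proof. by rewrite dotvC dotvBl !(dotvC w). Qed.
Lemma dotv_ge0 u : 0 <= dotv u u.
Proof. by apply: sumr_ge0 => i _; rewrite -expr2 sqr_ge0. Qed.
Lemma enorm_ge0 u : 0 <= enorm u.
Proof. exact: sqrtr_ge0. Qed.
Lemma enorm_sq u : enorm u ^+ 2 = dotv u u.
Proof. by rewrite /enorm sqr_sqrtr // dotv_ge0. Qed.
End A.
Lemma dotvNr {R : realType} {n : nat} (u v : 'rV[R]_n) : dotv u (- v) = - dotv u v.
Proof. by rewrite dotvC dotvNl dotvC. Qed.

Lemma bigmax_ub (R : realType) (I : eqType) (s : seq I) (F : I -> R) x0 i :
  i \in s -> F i <= \big[Num.max/x0]_(j <- s) F j.
Proof.
elim: s => // a s IH; rewrite inE big_cons => /orP[/eqP->|/IH h].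
  by rewrite le_max lexx.
by rewrite le_max h orbT.
Qed.



Lemma nmax_r (R : realType) (x y : R) : x <= y -> Num.max x y = y.
Proof. exact: max_r. Qed.
Lemma nmax_l (R : realType) (x y : R) : y <= x -> Num.max x y = x.
Proof. exact: max_l. Qed.

Section B.
Context {R : realType} {n m : nat} (A : 'I_m.+1 -> 'rV[R]_n) (b : 'I_m.+1 -> R).

Lemma pwmax_ub k X : dotv (A k) X + b k <= pwmax A b X.
Proof. exact: (@bigmax_ub R _ (index_enum _) (fun k => dotv (A k) X + b k) _ k (mem_index_enum k)). Qed.

Lemma pwmax_ex X : exists k, pwmax A b X = dotv (A k) X + b k.
Proof.
rewrite /pwmax; apply: (big_ind (fun y => exists k, y = dotv (A k) X + b k)).
- by exists ord0.
- move=> x y [i ->] [j ->]; case: (leP (dotv (A i) X + b i) (dotv (A j) X + b j)) => h.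
  + by exists j.
  + by exists i.
- by move=> i _; exists i.
Qed.

Lemma pwmax_convex X Z s : 0 <= s <= 1 ->
  pwmax A b (X + s *: (Z - X)) <= (1 - s) * pwmax A b X + s * pwmax A b Z.
Proof.
move=> /andP[s0 s1]; have [k ->] := pwmax_ex (X + s *: (Z - X)).
have h1 := pwmax_ub k X; have h2 := pwmax_ub k Z.
rewrite dotvDr dotvZr dotvBr.
have e : dotv (A k) X + s * (dotv (A k) Z - dotv (A k) X) + b k =
  (1 - s) * (dotv (A k) X + b k) + s * (dotv (A k) Z + b k) by ring.
rewrite e lerD // ?ler_wpM2l // subr_ge0 //.
Qed.

Lemma small_le (a c e : R) : 0 <= e -> (forall s, 0 < s <= 1 -> a <= c + s * e) -> a <= c.
Proof.
move=> e0 h; rewrite leNgt; apply/negP => ca.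
have d0 : 0 < a - c by rewrite subr_gt0.
have de : 0 < a - c + e by lra.
set s := (a - c) / (a - c + e).
have s0 : 0 < s by rewrite divr_gt0.
have s1 : s <= 1 by rewrite ler_pdivrMr // mul1r; lra.
have hs : s * (a - c + e) = a - c by rewrite mulfVK ?gt_eqF.
have := h s; rewrite s0 s1 => /(_ isT) H.
have : s * e < a - c.
  have : s * (a - c) > 0 by rewrite mulr_gt0.
  nra.
lra.
Qed.
End B.

Section C.
Context {R : realType} {n m : nat} (A : 'I_m.+1 -> 'rV[R]_n) (b : 'I_m.+1 -> R).

Lemma prox (X0 Y : 'rV[R]_n) (c : R) : 0 < c ->
  (forall Z, pwmax A b Y + c * dotv (Y - X0) (Y - X0) <=
             pwmax A b Z + c * dotv (Z - X0) (Z - X0)) ->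
  subdiff (pwmax A b) Y ((2 * c) *: (X0 - Y)).
Proof.
move=> c0 hmin Z.
apply: (@small_le R _ _ (c * dotv (Z - Y) (Z - Y))); first by apply: mulr_ge0; [exact: ltW|exact: dotv_ge0].
move=> s /andP[s0 s1].
have hc := @pwmax_convex R n m A b Y Z s; have {}hc := hc ltac:(by rewrite ltW //= s1).
have hm := hmin (Y + s *: (Z - Y)).
have e1 : Y + s *: (Z - Y) - X0 = (Y - X0) + s *: (Z - Y) by rewrite addrAC.
rewrite e1 in hm.
have e2 : X0 - Y = - (Y - X0) by rewrite opprB.
rewrite e2 scalerN dotvNl dotvZl.
move: hm hc; move: (Y - X0) (Z - Y) => W D.
rewrite !(dotvDl, dotvDr, dotvZl, dotvZr) (@dotvC _ _ D W).
set fY := pwmax A b Y; set fZ := pwmax A b Z; set fS := pwmax A b _.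
set w := dotv W W; set d := dotv W D; set dd := dotv D D.
move=> hm hc.
have : s * (fY - 2 * c * d - fZ - s * (c * dd)) <= 0 by nra.
rewrite pmulr_rle0 // => h; lra.
Qed.
End C.

Lemma main_of_min (R : realType) (n m : nat)
  (A : 'I_m.+1 -> 'rV[R]_n) (b : 'I_m.+1 -> R)
  (X0 : 'rV[R]_n) (r dlow : R) :
  0 < r -> 0 < dlow ->
  (forall X, enorm (X - X0) < r ->
     forall d, subdiff (pwmax A b) X d -> dlow <= enorm d) ->
  (exists Y, forall Z, pwmax A b Y + (dlow / r) * dotv (Y - X0) (Y - X0) <=
             pwmax A b Z + (dlow / r) * dotv (Z - X0) (Z - X0)) ->
  exists X, enorm (X - X0) < r /\
    pwmax A b X <= pwmax A b X0 - dlow * (r / 2).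
Proof.
move=> r0 d0 H2 [Y hY].
set c := dlow / r.
have c0 : 0 < c by rewrite divr_gt0.
have hcr : c * r = dlow by rewrite /c mulfVK ?gt_eqF.
have hs := prox A b X0 Y c c0 hY.
have h0 := hs X0.
have eXY : X0 - Y = - (Y - X0) by rewrite opprB.
rewrite eXY scalerN dotvNl dotvZl dotvNr in h0.
have Nsq := enorm_sq (Y - X0).
have N0 := enorm_ge0 (Y - X0).
set N := enorm (Y - X0) in Nsq N0 *.
set q := dotv (Y - X0) (Y - X0) in h0 Nsq.
set fY := pwmax A b Y in h0 *; set f0 := pwmax A b X0 in h0 *.
case: (ltP N r) => hN.
- exists Y; split => //.
  have := H2 Y hN _ hs.
  have gsq := enorm_sq ((2 * c) *: (X0 - Y)).
  have g0 := enorm_ge0 ((2 * c) *: (X0 - Y)).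
  have hq0 : dotv (X0 - Y) (X0 - Y) = q by rewrite eXY dotvNl dotvNr opprK.
  rewrite dotvZl dotvZr hq0 in gsq.
  move: gsq g0; set G := enorm _ => gsq g0 hG.
  have hq : dlow ^+ 2 <= (2 * c) * ((2 * c) * q).
    rewrite -gsq !expr2; nra.
  have hq2 : r ^+ 2 <= 4 * q.
    rewrite -(@ler_pM2l _ (c ^+ 2)) ?exprn_gt0 //.
    move: hq; rewrite -hcr !expr2 => hq; nra.
  have : 2 * c * q >= dlow * (r / 2).
    rewrite -hcr; have : 0 < c by []; nra.
  move=> hh; rewrite -/fY; lra.
- set s := r / (2 * N).
  have Npos : 0 < N by apply: lt_le_trans r0 hN.
  have hsN : s * N = r / 2 by rewrite /s invfM mulrA mulfVK ?gt_eqF // mulrC.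
  have s0 : 0 < s by rewrite divr_gt0 // mulr_gt0.
  have s1 : s <= 1.
    rewrite ler_pdivrMr ?mulr_gt0 //; lra.
  exists (X0 + s *: (Y - X0)); split.
  + rewrite addrC addKr.
    have e := enorm_sq (s *: (Y - X0)); have e0 := enorm_ge0 (s *: (Y - X0)).
    rewrite dotvZl dotvZr -/q -Nsq in e.
    move: e e0; set M := enorm _ => e e0.
    have : M ^+ 2 < r ^+ 2 by rewrite e; nra.
    rewrite !expr2 => h; rewrite ltNge; apply/negP => h'; nra.
  + have hc := @pwmax_convex R n m A b X0 Y s; rewrite ltW //= s1 in hc.
    apply: le_trans (hc isT) _.
    have : s * fY <= s * (f0 - 2 * c * q) by rewrite ler_pM2l //; lra.
    have : s * (2 * c * q) = dlow * N.
      rewrite -Nsq -hcr expr2; have -> : s * (2 * c * (N * N)) = 2 * c * (s * N) * N by ring.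
      by rewrite hsN; field.
    move=> hh1 hh2; rewrite -/fY -/f0; nra.
Qed.

Lemma cont_sum (R : realType) (T : topologicalType) (I : Type) (s : seq I) (G : I -> T -> R) :
  (forall i, continuous (G i)) -> continuous (fun x => \sum_(i <- s) G i x).
Proof.
elim: s => [|a s IH] hG.
  have -> : (fun x => \sum_(i <- [::]) G i x) = (fun=> 0) by apply: funext => x; rewrite big_nil.
  exact: cst_continuous.
have -> : (fun x => \sum_(i <- a :: s) G i x) = (G a) + (fun x => \sum_(i <- s) G i x).
  by apply: funext => x; rewrite big_cons.
move=> x; apply: continuousD; [exact: hG | exact: IH].
Qed.

Lemma cont_max (R : realType) (T : topologicalType) (I : Type) (s : seq I) (G : I -> T -> R) g0 :
  continuous g0 -> (forall i, continuous (G i)) -> continuous (fun x => \big[Num.max/g0 x]_(i <- s) G i x).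
Proof.
move=> h0; elim: s => [|a s IH] hG.
  have -> : (fun x => \big[Num.max/g0 x]_(i <- [::]) G i x) = g0 by apply: funext => x; rewrite big_nil.
  exact: h0.
have -> : (fun x => \big[Num.max/g0 x]_(i <- a :: s) G i x) = (G a) \max (fun x => \big[Num.max/g0 x]_(i <- s) G i x).
  by apply: funext => x; rewrite big_cons.
apply: max_fun_continuous; [exact: hG | exact: IH].
Qed.

Lemma cont_dotv (R : realType) (n : nat) (u : 'rV[R]_n) :
  continuous (fun Z : 'rV[R]_n => dotv u Z).
Proof.
rewrite /dotv; apply: (@cont_sum R _ _ _ (fun i (Z : 'rV[R]_n) => u ord0 i * Z ord0 i)) => i.
move=> x; apply: continuousM; [exact: cst_continuous | exact: coord_continuous].
Qed.

Lemma cont_sq (R : realType) (n : nat) (X0 : 'rV[R]_n) :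
  continuous (fun Z : 'rV[R]_n => dotv (Z - X0) (Z - X0)).
Proof.
have -> : (fun Z : 'rV[R]_n => dotv (Z - X0) (Z - X0)) =
  (fun Z => \sum_(i < n) ((Z ord0 i - X0 ord0 i) * (Z ord0 i - X0 ord0 i))).
  by apply: funext => Z; rewrite /dotv; apply: eq_bigr => i _; rewrite !mxE.
apply: (@cont_sum R _ _ _ (fun i (Z : 'rV[R]_n) => (Z ord0 i - X0 ord0 i) * (Z ord0 i - X0 ord0 i))) => i.
have hc : continuous (fun Z : 'rV[R]_n => Z ord0 i - X0 ord0 i).
  move=> x; apply: continuousB; [exact: coord_continuous | exact: cst_continuous].
move=> x /=; exact: (continuousM (hc x) (hc x)).
Qed.

Lemma cont_phi (R : realType) (n m : nat) (A : 'I_m.+1 -> 'rV[R]_n) (b : 'I_m.+1 -> R)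
  (X0 : 'rV[R]_n) (c : R) :
  continuous (fun Z => pwmax A b Z + c * dotv (Z - X0) (Z - X0)).
Proof.
move=> x; apply: continuousD; last first.
  apply: continuousM; [exact: cst_continuous | exact: cont_sq].
rewrite /pwmax.
apply: (@cont_max R _ _ _ (fun k Z => dotv (A k) Z + b k) (fun Z => dotv (A ord0) Z + b ord0)).
- move=> y; apply: continuousD; [exact: cont_dotv | exact: cst_continuous].
- move=> k y; apply: continuousD; [exact: cont_dotv | exact: cst_continuous].
Qed.

Lemma phi_lb (R : realType) (n m : nat) (A : 'I_m.+1 -> 'rV[R]_n) (b : 'I_m.+1 -> R)
  (X0 : 'rV[R]_n) (c : R) : 0 < c ->
  forall (Z : 'rV[R]_n) (j : 'I_n),
  dotv (A ord0) X0 + b ord0 - \sum_(i < n) (A ord0 ord0 i * A ord0 ord0 i / (4 * c))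
   + c * ((Z ord0 j - (X0 ord0 j - A ord0 ord0 j / (2 * c))) ^+ 2)
  <= pwmax A b Z + c * dotv (Z - X0) (Z - X0).
Proof.
move=> c0 Z j.
have h := pwmax_ub A b ord0 Z.
set a := A ord0 in h *.
have e1 : dotv a Z = dotv a X0 + dotv a (Z - X0) by rewrite dotvBr addrC subrK.
set W := Z - X0 in e1 *.
set u := fun i => W ord0 i + a ord0 i / (2 * c).
have e2 : dotv a W + c * dotv W W =
   c * (\sum_(i < n) u i * u i) - \sum_(i < n) (a ord0 i * a ord0 i / (4 * c)).
  rewrite /dotv mulr_sumr mulr_sumr -big_split -sumrB /=; apply: eq_bigr => i _.
  rewrite /u; field; rewrite gt_eqF //.
have e3 : Z ord0 j - (X0 ord0 j - a ord0 j / (2 * c)) = u j.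
  by rewrite /u /W !mxE; ring.
have e4 : u j * u j <= \sum_(i < n) u i * u i.
  rewrite (bigD1 j) //= lerDl; apply: sumr_ge0 => i _; by rewrite -expr2 sqr_ge0.
have e5 : c * (u j * u j) <= c * (\sum_(i < n) u i * u i) by rewrite ler_pM2l.
rewrite e1 in h.
rewrite e3 expr2; lra.
Qed.

Lemma exists_min (R : realType) (n m : nat) (A : 'I_m.+1 -> 'rV[R]_n) (b : 'I_m.+1 -> R)
  (X0 : 'rV[R]_n) (c : R) : 0 < c ->
  exists Y, forall Z, pwmax A b Y + c * dotv (Y - X0) (Y - X0) <=
             pwmax A b Z + c * dotv (Z - X0) (Z - X0).
Proof.
move=> c0.
set phi := fun Z => pwmax A b Z + c * dotv (Z - X0) (Z - X0).
have hlb := @phi_lb R n m A b X0 c c0.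
set K0 := dotv (A ord0) X0 + b ord0 - _ in hlb.
set P := fun i => X0 ord0 i - A ord0 ord0 i / (2 * c).
set P' := \row_i P i.
set M := 1 + `|phi P' - K0| / c.
have M1 : 1 <= M by rewrite lerDl divr_ge0 // ltW.
have hM : phi P' - K0 <= c * M.
  have : `|phi P' - K0| <= c * M.
    have : `|phi P' - K0| / c <= M by rewrite lerDr.
    by rewrite ler_pdivrMr // mulrC.
  apply: le_trans; exact: ler_norm.
set S := [set v : 'rV[R]_n | forall i, `[P i - M, P i + M]%classic (v ord0 i)].
have Sc : compact S.
  by apply: (@rV_compact _ _ (fun i => `[P i - M, P i + M]%classic)) => i; exact: segment_compact.
have PS : S P'.
  move=> i /=; rewrite mxE /= in_itv /=; apply/andP; split; lra.
have S0 : S !=set0 by exists P'.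
have hc : {within S, continuous phi} by apply: continuous_subspaceT; exact: (@cont_phi R n m A b X0 c).
have [Y YS hY] := compact_EVT_min S0 Sc hc.
exists Y => Z.
have hYP : phi Y <= phi P' by apply: hY; exact: mem_set.
case: (pselect (S Z)) => hZ; first by apply: hY; exact: mem_set.
have [j hj] : exists j, ~ `[P j - M, P j + M]%classic (Z ord0 j) by apply/existsNP.
have hb := hlb Z j; rewrite -/(P j) in hb.
have hj' : M < `|Z ord0 j - P j|.
  rewrite ltNge; apply/negP => h; apply: hj => /=; rewrite in_itv /=.
  move: h; rewrite ler_norml => /andP[h1 h2]; apply/andP; split; lra.
have hsq : M < (Z ord0 j - P j) ^+ 2.
  have e : `|Z ord0 j - P j| ^+ 2 = (Z ord0 j - P j) ^+ 2 by rewrite real_normK // num_real.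
  rewrite -e expr2; nra.
have : c * M < c * (Z ord0 j - P j) ^+ 2 by rewrite ltr_pM2l.
rewrite /phi in hYP hM *; lra.
Qed.

Theorem lemma2p3 (R : realType) (n m : nat)
  (A : 'I_m.+1 -> 'rV[R]_n) (b : 'I_m.+1 -> R)
  (X0 : 'rV[R]_n) (r dlow : R) :
  (forall k, 0 < enorm (A k)) ->
  0 < r -> 0 < dlow ->
  (forall X, enorm (X - X0) < r -> ~ subdiff (pwmax A b) X 0) ->
  (forall X, enorm (X - X0) < r ->
     forall d, subdiff (pwmax A b) X d -> dlow <= enorm d) ->
  exists X, enorm (X - X0) < r /\
    pwmax A b X <= pwmax A b X0 - dlow * (r / 2).
Proof.
move=> _ r0 d0 _ H2.
apply: (@main_of_min R n m A b X0 r dlow r0 d0 H2).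
apply: exists_min; exact: divr_gt0.
Qed.
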